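(* Let $G$ be a cycle of cliques with cliques $\{C_1,\dots,C_\ell\}$. If there are two cliques $C_i$ and $C_j$ with $C_{i,i}$ and $C_{j,j}$ non-empty, then $Z_+(G)=|V(G)|-\operatorname{cc}(G)$.
   Context: $\operatorname{cc}(G)$ is the minimum number of cliques needed to cover all edges of $G$. A min-max clique covering is a clique covering of size $\operatorname{cc}(G)$ consisting of maximal cliques. $G$ is a cycle of cliques (with cliques $\{C_1,\dots,C_\ell\}$) if $\{C_1,\dots,C_\ell\}$ is a min-max clique covering of $G$ with $C_i\cap C_{i+1}\neq\emptyset$ for $i=1,\dots,\ell-1$ and $C_1\cap C_\ell\neq\emptyset$, while all other pairwise intersections are empty. $C_{i,i}=C_i\setminus\bigcup_{j\ne i}C_j$. $Z_+(G)$ is the positive zero forcing number: the minimum size of a set $B$ of initially black vertices such that repeated application of the rule ''let $W_1,\dots,W_k$ be the vertex sets of components of $G$ minus the black vertices; a black vertex $u$ whose only white neighbour in the subgraph induced by $W_i\cup(\text{black vertices})$ is $w$ may turn $w$ black'' eventually makes all vertices black. *)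

(* Defs.v *)
(* A simple graph is a symmetric irreflexive relation
   e : rel T on a finite vertex type T; V(G) = T. *)
From mathcomp Require Import all_boot.
Set Implicit Arguments. Unset Strict Implicit. Unset Printing Implicit Defensive.

Section Graph.
Variables (T : finType) (e : rel T).

Definition is_clique (K : {set T}) : bool :=
  [forall x in K, forall y in K, (x != y) ==> e x y].

Definition is_max_clique (K : {set T}) : bool :=
  is_clique K && [forall K' : {set T}, (is_clique K' && (K \subset K')) ==> (K' == K)].

Definition clique_covering (P : {set {set T}}) : bool :=
  [forall K in P, is_clique K] &&
  [forall x, forall y, e x y ==> [exists K in P, (x \in K) && (y \in K)]].

(* cc(G): minimum size of a clique covering (for a simple graph a covering
   always exists, e.g. all edges; the default #|{set {set T}}| is never used). *)
Definition cc : nat :=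
  \big[minn/#|{set {set T}}|]_(P : {set {set T}} | clique_covering P) #|P|.

Definition min_max_clique_covering (P : {set {set T}}) : bool :=
  [&& clique_covering P, [forall K in P, is_max_clique K] & #|P| == cc].

Definition cyc_adj (l : nat) (i j : 'I_l) : bool :=
  (j == i.+1 %% l :> nat) || (i == j.+1 %% l :> nat).

Definition cycle_of_cliques (l : nat) (C : 'I_l -> {set T}) : Prop :=
  injective C /\
  min_max_clique_covering [set C i | i : 'I_l] /\
  (forall i j : 'I_l, i != j -> (C i :&: C j != set0) = cyc_adj i j).

(* C_{i,i} = C_i minus the union of all other C_j. *)
Definition private_part (l : nat) (C : 'I_l -> {set T}) (i : 'I_l) : {set T} :=
  C i :\: \bigcup_(j : 'I_l | j != i) C j.

Definition white_rel (B : {set T}) : rel T :=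
  fun x y => [&& x \notin B, y \notin B & e x y].

(* black u may force white w: w is the only white neighbour of u inside the
   component W of G - B containing w (i.e. the only white neighbour of u in
   G[W ∪ B]). *)
Definition pforce (B : {set T}) (u w : T) : bool :=
  [&& u \in B, w \notin B, e u w &
      [forall v, ([&& v \notin B, connect (white_rel B) w v & e u v]) ==> (v == w)]].

(* B eventually turns everything black using at most n forces; since each
   force blackens one new vertex, n = #|T| forces always suffice. *)
Fixpoint pzf_within (n : nat) (B : {set T}) : bool :=
  (B == setT) ||
  (if n is n'.+1 then [exists u, exists w, pforce B u w && pzf_within n' (w |: B)]
   else false).

Definition pzf_set (B : {set T}) : bool := pzf_within #|T| B.

(* Z_+(G): minimum size of a positive zero forcing set (setT always is one). *)
Definition Zplus : nat :=
  \big[minn/#|T|]_(B : {set T} | pzf_set B) #|B|.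

End Graph.

(* Main.v *)
Require Import Defs.
From mathcomp Require Import all_boot zify.
Set Implicit Arguments. Unset Strict Implicit. Unset Printing Implicit Defensive.

Lemma pzf_mono (T : finType) (e : rel T) n m B :
  pzf_within e n B -> n <= m -> pzf_within e m B.
Proof.
elim: n m B => [|n IH] m B /=.
  by rewrite orbF => /eqP -> _; case: m => [|m] /=; rewrite eqxx.
case: m => [|m] //= /orP[/eqP -> _|/existsP[u /existsP[w /andP[F P]]] Hnm].
  by rewrite eqxx.
apply/orP; right; apply/existsP; exists u; apply/existsP; exists w.
by rewrite F; apply: IH.
Qed.

Lemma connect_noout (T : finType) (r : rel T) x y :
  (forall z, ~~ r x z) -> connect r x y -> y = x.
Proof.
move=> H /connectP[[|z p] /= Hp ->] //.
by case/andP: Hp => Hz _; move: (H z); rewrite Hz.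
Qed.

Lemma pzf_rank (T : finType) (e : rel T) (e_irr : irreflexive e)
  (I : finType) (w : I -> T) (r : I -> nat) :
  injective w -> injective r ->
  (forall k, exists u, [/\ (forall m, u = w m -> r m < r k), e u (w k) &
     (forall m, r k < r m -> ~~ e u (w m)) \/ (forall m, r k < r m -> ~~ e (w k) (w m))]) ->
  forall A : {set I}, pzf_within e #|A| (~: (w @: A)).
Proof.
move=> winj rinj H A; move Hn: #|A| => n.
elim: n A Hn => [|n IH] A Hn.
  move/eqP: Hn; rewrite cards_eq0 => /eqP ->; rewrite imset0 setC0 /=.
  by rewrite eqxx.
have [k0 k0A] : exists k0, k0 \in A.
  by apply/set0Pn; rewrite -card_gt0 Hn.
case: (arg_minnP r k0A) => k kA kmin.
have minr : forall m, m \in A -> m != k -> r k < r m.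
  move=> m mA mk; rewrite ltn_neqAle kmin // andbT.
  by apply: contra mk => /eqP/rinj ->.
simpl; apply/orP; right.
case: (H k) => u [Hu euw Hmode].
apply/existsP; exists u; apply/existsP; exists (w k); apply/andP; split.
  apply/and4P; split.
  - rewrite in_setC; apply/imsetP => -[m mA um].
    have := Hu m um; rewrite ltnNge kmin //.
  - by rewrite in_setC negbK; apply: imset_f.
  - exact: euw.
  - apply/forallP => v; apply/implyP => /and3P[vB cv euv].
    move: vB; rewrite in_setC negbK => /imsetP[m mA vm]; subst v.
    have [->//|mk] := eqVneq m k.
    case: Hmode => Hm.
      by move: (Hm m (minr m mA mk)); rewrite euv.
    have := connect_noout _ cv; move=> ->; first by [].
    move=> z; apply/negP => /and3P[_ zB ez].
    move: zB; rewrite in_setC negbK => /imsetP[m' m'A zm']; subst z.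
    have [m'k|m'k] := eqVneq m' k.
      by subst m'; move: ez; rewrite e_irr.
    by move: (Hm m' (minr m' m'A m'k)); rewrite ez.
have -> : w k |: ~: (w @: A) = ~: (w @: (A :\ k)).
  apply/setP => x; case: (eqVneq x (w k)) => [->|xk].
    by rewrite !inE eqxx /= mem_imset // !inE eqxx.
  rewrite !inE (negbTE xk) /=.
  congr negb; apply/imsetP/imsetP => [[m mA xm]|[m]]; last first.
    by rewrite !inE => /andP[_ mA] ->; exists m.
  exists m => //; rewrite !inE mA andbT; apply: contra xk => /eqP mk.
  by rewrite xm mk.
have kA' : k \in A by [].
apply: IH; have := cardsD1 k A; rewrite kA' Hn add1n; by case=> ->.
Qed.

Lemma pzf_lower (T : finType) (e : rel T) (P : {set {set T}}) :
  clique_covering e P -> forall n B, pzf_within e n B ->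
  #|~: B| <= #|[set K in P | ~~ (K \subset B)]|.
Proof.
case/andP=> /forallP Pcl /forallP Pcov.
elim=> [|n IH] B /=.
  by rewrite orbF => /eqP ->; rewrite setCT cards0.
case/orP=> [/eqP ->|/existsP[u /existsP[w /andP[F Hp]]]].
  by rewrite setCT cards0.
have IHB := IH _ Hp.
case/and4P: F => uB wB euw /forallP Huniq.
have /existsP[K /and3P[KP uK wK]] := implyP (forallP (Pcov u) w) euw.
have Kcl := implyP (Pcl K) KP.
have KwB : K \subset w |: B.
  apply/subsetP => v vK; rewrite !inE; case: (eqVneq v w) => //= vw.
  apply/negPn/negP => vB.
  have uv : u != v by apply: contraNneq vB => <-.
  have wv : w != v by rewrite eq_sym.
  have cl : forall x y, x \in K -> y \in K -> x != y -> e x y.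
    by move=> x y xK yK xy; move/forallP: Kcl => /(_ x) /implyP /(_ xK) /forallP /(_ y) /implyP /(_ yK) /implyP /(_ xy).
  have c : connect (white_rel e B) w v.
    by apply: connect1; rewrite /white_rel wB vB /=; exact: cl.
  have euv : e u v by exact: cl.
  have := implyP (Huniq v); rewrite vB c euv /= => /(_ isT) /eqP H.
  by move: vw; rewrite H eqxx.
have cB : #|~: B| = #|~: (w |: B)|.+1.
  rewrite setCU (cardsD1 w (~: B)) inE wB add1n; congr S; apply: eq_card => x.
  by rewrite !inE andbC.
rewrite cB.
have sub : [set K0 in P | ~~ (K0 \subset w |: B)] \subset [set K0 in P | ~~ (K0 \subset B)] :\ K.
  apply/subsetP => K0; rewrite !inE => /andP[K0P H]; rewrite K0P /=.
  apply/andP; split.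
    by apply: contraNneq H => ->.
  by apply: contra H => /subset_trans; apply; apply/subsetP => x; rewrite !inE orbC => ->.
have KS : K \in [set K0 in P | ~~ (K0 \subset B)].
  rewrite inE KP /=; apply/negP => /subsetP /(_ _ wK); rewrite (negbTE wB).
  done.
rewrite (cardsD1 K) KS add1n ltnS.
exact: leq_trans IHB (subset_leq_card sub).
Qed.

Definition ADJ (l x y : nat) : Prop :=
  y = x.+1 \/ x = y.+1 \/ (x.+1 = l /\ y = 0) \/ (y.+1 = l /\ x = 0).

Definition Dhyp (T : finType) (e : rel T) (l : nat) (D : nat -> {set T}) : Prop :=
  [/\ (forall x a b, x < l -> a \in D x -> b \in D x -> a != b -> e a b),
      (forall a b, e a b -> exists x, [/\ x < l, a \in D x & b \in D x]),
      (forall x y, x < l -> y < l -> D x \subset D y -> x = y) &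
      (forall x y, x < l -> y < l -> x <> y -> ((exists v, v \in D x /\ v \in D y) <-> ADJ l x y))].

Lemma rank_concl (T : finType) (e : rel T) (e_irr : irreflexive e) (l : nat)
  (w : 'I_l -> T) (r : 'I_l -> nat) :
  injective w -> injective r ->
  (forall k, exists u, [/\ (forall m, u = w m -> r m < r k), e u (w k) &
     (forall m, r k < r m -> ~~ e u (w m)) \/ (forall m, r k < r m -> ~~ e (w k) (w m))]) ->
  exists B : {set T}, pzf_set e B /\ #|B| = #|T| - l.
Proof.
move=> wi ri H; exists (~: (w @: setT)).
have cw : #|w @: setT| = l by rewrite card_imset // cardsT card_ord.
split; last by rewrite cardsCs setCK cw.
apply: pzf_mono (pzf_rank e_irr wi ri H setT) _.
by rewrite -(card_imset _ wi); apply: max_card.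
Qed.


Lemma nonadj (T : finType) (e : rel T) l D : Dhyp e l D ->
  forall a b, (forall z, z < l -> a \in D z -> b \in D z -> False) -> ~~ e a b.
Proof.
case=> _ cov _ _ a b H; apply/negP => /cov [z [zl az bz]]; exact: H z zl az bz.
Qed.

Lemma adjl (T : finType) (e : rel T) l D : Dhyp e l D ->
  forall v x z, x < l -> z < l -> v \in D x -> v \in D z -> x = z \/ ADJ l x z.
Proof.
case=> _ _ _ ad v x z xl zl vx vz.
have [->|xz] := eqVneq x z; first by left.
right; apply/(ad x z xl zl); first by apply/eqP.
by exists v.
Qed.

Lemma interD (T : finType) (e : rel T) l D : Dhyp e l D ->
  forall x z, x < l -> z < l -> x <> z -> ADJ l x z -> exists v, v \in D x /\ v \in D z.
Proof. by case=> _ _ _ ad x z xl zl xz /(ad x z xl zl xz). Qed.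

Lemma diffD (T : finType) (e : rel T) l D : Dhyp e l D ->
  forall x z, x < l -> z < l -> x <> z -> exists v, v \in D x /\ v \notin D z.
Proof.
case=> _ _ mx _ x z xl zl xz.
have : ~~ (D x \subset D z) by apply/negP => /(mx x z xl zl).
by case/subsetPn => v vx vz; exists v.
Qed.

Definition pk (T : finType) (A : {set T}) (d : T) := odflt d [pick v in A].

Lemma pkP (T : finType) (A : {set T}) d : (exists v, v \in A) -> pk A d \in A.
Proof.
case=> v vA; rewrite /pk; case: pickP => [x //|/(_ v)]; by rewrite vA.
Qed.



Ltac keep_arith := repeat match goal with
 | H : ?P |- _ =>
    let t := type of P in
    lazymatch t with
    | Prop =>
      lazymatch P with
      | is_true (_ \in _) => clear H
      | is_true (~~ (_ \in _)) => clear H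
      | @eq _ _ _ => fail
      | is_true _ => fail
      | ~ (@eq _ _ _) => fail
      | _ /\ _ => fail
      | _ \/ _ => fail
      | _ => clear H
      end
    | _ => fail
    end
 end.
Ltac slia := keep_arith; lia.

Lemma big_case (T : finType) (e : rel T) (e_irr : irreflexive e) l D J p q :
  Dhyp e l D -> 3 < l -> 0 < J < l ->
  p \in D 0 -> (forall z, z < l -> p \in D z -> z = 0) ->
  q \in D J -> (forall z, z < l -> q \in D z -> z = J) ->
  exists B : {set T}, pzf_set e B /\ #|B| = #|T| - l.
Proof.
move=> H l4 /andP[J0 Jl] p0 pL qJ qL.
have adj := adjl H; have inter := interD H; have diff := diffD H.
have [Dcl _ _ _] := H.
pose nxt x := if x.+1 == l then 0 else x.+1.
have nxtP x : x < l -> nxt x < l /\ ((x.+1 < l /\ nxt x = x.+1) \/ (x.+1 = l /\ nxt x = 0)).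
  rewrite /nxt; case: eqP => E xl; lia.
pose wA x := pk (D x :\: D x.-1) p.
pose wB x := pk (D x :\: D (nxt x)) p.
pose uA x := pk (D x.-1 :&: D x) p.
pose uB x := pk (D x :&: D (nxt x)) p.
have wAP x : 0 < x < l -> wA x \in D x /\ forall z, z < l -> wA x \in D z -> z = x \/ z = x.+1 \/ (x.+1 = l /\ z = 0).
  move=> /andP[x0 xl].
  have : wA x \in D x :\: D x.-1.
    apply: pkP; have [v [vx vn]] := diff x x.-1 xl ltac:(lia) ltac:(lia).
    by exists v; rewrite inE vx vn.
  rewrite inE => /andP[nin win]; split=> // z zl wz.
  have nz : z.+1 <> x.
    move=> E; have E' : x.-1 = z by slia.
    by move: nin; rewrite E' wz.
  case: (adj _ _ _ xl zl win wz); rewrite /ADJ; slia.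
have wBP x : 0 < x < l -> wB x \in D x /\ forall z, z < l -> wB x \in D z -> z = x \/ z.+1 = x.
  move=> /andP[x0 xl]; have [nl nE] := nxtP x xl.
  have : wB x \in D x :\: D (nxt x).
    apply: pkP; have [v [vx vn]] := diff x (nxt x) xl nl ltac:(lia).
    by exists v; rewrite inE vx vn.
  rewrite inE => /andP[nin win]; split=> // z zl wz.
  have nz : z <> nxt x by move=> E; move: nin; rewrite -E wz.
  case: (adj _ _ _ xl zl win wz); rewrite /ADJ; slia.
have uAP x : 0 < x < l -> uA x \in D x /\ uA x \in D x.-1 /\ forall z, z < l -> uA x \in D z -> z = x \/ z.+1 = x.
  move=> /andP[x0 xl].
  have : uA x \in D x.-1 :&: D x.
    apply: pkP; have [v [vx vn]] := inter x.-1 x ltac:(lia) xl ltac:(lia) ltac:(rewrite /ADJ; slia).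
    by exists v; rewrite inE vx vn.
  rewrite inE => /andP[u1 u2]; split=> //; split=> // z zl uz.
  case: x x0 xl u1 u2 uz => [//|y] x0 xl u1 u2 uz; rewrite /= in u1.
  case: (adj _ _ _ xl zl u2 uz); case: (adj _ y z ltac:(lia) zl u1 uz); rewrite /ADJ; slia.
have uBP x : x < l -> uB x \in D x /\ uB x \in D (nxt x) /\ forall z, z < l -> uB x \in D z -> z = x \/ z = nxt x.
  move=> xl; have [nl nE] := nxtP x xl.
  have : uB x \in D x :&: D (nxt x).
    apply: pkP; have [v [vx vn]] := inter x (nxt x) xl nl ltac:(lia) ltac:(rewrite /ADJ; slia).
    by exists v; rewrite inE vx vn.
  rewrite inE => /andP[u1 u2]; split=> //; split=> // z zl uz.
  case: (adj _ _ _ xl zl u1 uz); case: (adj _ _ _ nl zl u2 uz); rewrite /ADJ; slia.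
pose Wn x := if x == 0 then p else if x == J then q else if x < J then wA x else wB x.
pose Un x := if x == 0 then uA 1 else if x <= J then uA x else uB x.
pose sn x := if x == 0 then 1 else if x <= J then x.-1 else nxt x.
pose Rn x := if x == 0 then 0 else if x == J then 2*l else if x < J then x else 2*l - x.
have HW x : x < l -> Wn x \in D x.
  move=> xl; rewrite /Wn; case: eqP => [->//|x0]; case: eqP => [->//|xJ].
  case: ifP => xJ'; [exact: (wAP x ltac:(lia)).1 | exact: (wBP x ltac:(lia)).1].
have LW x z : x < l -> z < l -> Wn x \in D z ->
    (x = 0 /\ z = 0) \/ (x = J /\ z = J) \/ (0 < x < J /\ (z = x \/ z = x.+1)) \/ (J < x /\ (z = x \/ z.+1 = x)).
  move=> xl zl; rewrite /Wn; case: eqP => [-> /(pL z zl)|x0]; first slia.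
  case: eqP => [-> /(qL z zl)|xJ]; first slia.
  case: ifP => xJ' H1.
    have := (wAP x ltac:(lia)).2 z zl H1; slia.
  have := (wBP x ltac:(lia)).2 z zl H1; slia.
have HU x : x < l -> Un x \in D x /\ Un x \in D (sn x) /\ sn x < l /\
    ((x = 0 /\ sn x = 1) \/ (0 < x <= J /\ (sn x).+1 = x) \/
     (J < x /\ ((x.+1 < l /\ sn x = x.+1) \/ (x.+1 = l /\ sn x = 0)))).
  move=> xl; rewrite /Un /sn; case: eqP => [->|x0].
    have [a [b _]] := uAP 1 ltac:(lia); split=> //; split=> //; slia.
  case: ifP => xJ.
    have [a [b _]] := uAP x ltac:(lia); split=> //; split=> //; slia.
  have [a [b _]] := uBP x xl; have [nl nE] := nxtP x xl; split=> //; split=> //; slia.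
have LU x z : x < l -> z < l -> Un x \in D z ->
    (x = 0 /\ (z = 0 \/ z = 1)) \/ (0 < x <= J /\ (z.+1 = x \/ z = x)) \/
    (J < x /\ (z = x \/ (x.+1 < l /\ z = x.+1) \/ (x.+1 = l /\ z = 0))).
  move=> xl zl; rewrite /Un; case: eqP => [-> H1|x0].
    have := (uAP 1 ltac:(lia)).2.2 z zl H1; slia.
  case: ifP => xJ H1.
    have := (uAP x ltac:(lia)).2.2 z zl H1; slia.
  have := (uBP x xl).2.2 z zl H1; have [nl nE] := nxtP x xl; slia.
have RE x : x < l -> (x = 0 /\ Rn x = 0) \/ (x = J /\ Rn x = 2*l) \/
    (0 < x < J /\ Rn x = x) \/ (J < x /\ Rn x = 2*l - x).
  move=> xl; rewrite /Rn; case: eqP => [->|x0]; first slia.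
  case: eqP => [->|xJ]; first slia.
  case: ifP => xJ'; slia.
clearbody Wn Un sn Rn.
apply: (@rank_concl _ e e_irr l (fun k => Wn k) (fun k => Rn k)).
- move=> a b E; apply/val_inj => /=.
  have A1 := HW a (ltn_ord a); have B1 := HW b (ltn_ord b).
  have := LW b a (ltn_ord b) (ltn_ord a) ltac:(by rewrite -E).
  have := LW a b (ltn_ord a) (ltn_ord b) ltac:(by rewrite E).
  have := ltn_ord a; have := ltn_ord b; slia.
- move=> a b E; apply/val_inj => /=.
  have := RE a (ltn_ord a); have := RE b (ltn_ord b); have := ltn_ord a; have := ltn_ord b; slia.
move=> k; set x := val k; have xl : x < l by exact: ltn_ord.
have [U1 [U2 [sl SP]]] := HU x xl.
have one : forall m : 'I_l, Un x = Wn m -> Rn m < Rn x.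
  move=> m E; have ml := ltn_ord m.
  have := LU x m xl ml ltac:(by rewrite E; apply: HW).
  have := LW m x ml xl ltac:(by rewrite -E).
  have := LW m (sn x) ml sl ltac:(by rewrite -E).
  have := RE m ml; have := RE x xl; slia.
exists (Un x); split=> //.
  apply: (Dcl x _ _ xl U1 (HW x xl)); apply/eqP => E.
  by have := one k E; rewrite ltnn.
have [x0|x0] := eqVneq x 0.
  right=> m Rm; apply: (nonadj H) => z zl W1 W2.
  have ml := ltn_ord m.
  have := LW x z xl zl W1; have := LW m z ml zl W2.
  have := RE m ml; have := RE x xl; slia.
left=> m Rm; apply: (nonadj H) => z zl W1 W2.
have ml := ltn_ord m.
have := LU x z xl zl W1; have := LW m z ml zl W2.
have := RE m ml; have := RE x xl; slia.
Qed.

Lemma small_core (T : finType) (e : rel T) (e_irr : irreflexive e) l D J p q r ur v0 :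
  Dhyp e l D -> 1 < l <= 3 -> 0 < J < l ->
  p \in D 0 -> (forall z, z < l -> p \in D z -> z = 0) ->
  q \in D J -> (forall z, z < l -> q \in D z -> z = J) ->
  v0 \in D 0 -> v0 \in D J ->
  (3 - J < l -> [/\ r \in D (3 - J), r \notin D 0, (forall z, z < l -> r \in D z -> z = 3 - J \/ z = J),
     ur \in D (3 - J) &
     ur \in D 0 /\ ((forall z, z < l -> ur \in D z -> z <> J) \/ (forall z, z < l -> r \in D z -> z <> J))]) ->
  exists B : {set T}, pzf_set e B /\ #|B| = #|T| - l.
Proof.
move=> H /andP[l1 l3] /andP[J0 Jl] p0 pL qJ qL v00 v0J Hr.
have [Dcl _ _ _] := H.
have [t Ht] : exists t, t = 3 - J by eexists.
rewrite -Ht in Hr.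
pose Wn x := if x == 0 then p else if x == J then q else r.
pose Un x := if x == t then ur else v0.
pose Rn x := if x == 0 then 0 else if x == J then 2 else 1.
have cases x : x < l -> x = 0 \/ x = J \/ (x = t /\ t < l).
  slia.
have HW x : x < l -> Wn x \in D x.
  move=> xl; rewrite /Wn; case: eqP => [->//|x0]; case: eqP => [->//|xJ].
  have [|[|[xt tl]]] := cases x xl; try slia.
  by case: (Hr tl) => ? _ _ _ _; rewrite xt.
have LW x z : x < l -> z < l -> Wn x \in D z ->
    (x = 0 /\ z = 0) \/ (x = J /\ z = J) \/ (x = t /\ (z = t \/ z = J)).
  move=> xl zl; rewrite /Wn; case: eqP => [-> /(pL z zl)|x0]; first slia.
  case: eqP => [-> /(qL z zl)|xJ]; first slia.
  have [|[|[xt tl]]] := cases x xl; try slia.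
  case: (Hr tl) => _ r0 rL _ _ rz.
  have := rL z zl rz; have : z <> 0 by move=> E; move: r0; rewrite -E rz.
  slia.
have HU x : x < l -> [/\ Un x \in D x, Un x \in D 0, (x = t -> Un x \in D t) & (x <> t -> Un x \in D J)].
  move=> xl; rewrite /Un; case: eqP => [xt|xt].
    have tl : t < l by rewrite -xt.
    by case: (Hr tl) => _ _ _ ? [? _]; rewrite xt.
  split=> //; have [->|[->|]] := cases x xl => //; slia.
have RE x : x < l -> (x = 0 /\ Rn x = 0) \/ (x = J /\ Rn x = 2) \/ (x = t /\ Rn x = 1).
  move=> xl; have := cases x xl; rewrite /Rn; case: eqP => [->|x0]; first slia.
  case: eqP => [->|xJ]; slia.
have Unt : Un t = ur by rewrite /Un eqxx.
have Wnt : t <> 0 -> t <> J -> Wn t = r by move=> t0 tJ; rewrite /Wn !ifN_eq //; apply/eqP.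
clearbody Wn Un Rn.
apply: (@rank_concl _ e e_irr l (fun k => Wn k) (fun k => Rn k)).
- move=> a b E; apply/val_inj => /=.
  have A1 := HW a (ltn_ord a); have B1 := HW b (ltn_ord b).
  have := LW b a (ltn_ord b) (ltn_ord a) ltac:(by rewrite -E).
  have := LW a b (ltn_ord a) (ltn_ord b) ltac:(by rewrite E).
  have := ltn_ord a; have := ltn_ord b; slia.
- move=> a b E; apply/val_inj => /=.
  have := RE a (ltn_ord a); have := RE b (ltn_ord b); have := ltn_ord a; have := ltn_ord b.
  have := cases a (ltn_ord a); have := cases b (ltn_ord b); slia.
move=> k; set x := val k; have xl : x < l by exact: ltn_ord.
have [U1 U0 Ut UJ] := HU x xl.
have one : forall m : 'I_l, Un x = Wn m -> False.
  move=> m E; have ml := ltn_ord m.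
  have := LW m 0 ml ltac:(lia) ltac:(by rewrite -E).
  have [|[|[xt tl]]] := cases x xl.
  - move=> x0; have := LW m J ml Jl ltac:(by rewrite -E; apply: UJ; slia); slia.
  - move=> x0; have := LW m J ml Jl ltac:(by rewrite -E; apply: UJ; slia); slia.
  - have := LW m t ml tl ltac:(by rewrite -E; apply: Ut); slia.
exists (Un x); split.
- by move=> m /one.
- apply: (Dcl x _ _ xl U1 (HW x xl)); apply/eqP => E; exact: one k E.
clearbody x.
have [|[|[xt tl]]] := cases x xl.
- move=> x0; right=> m Rm; apply: (nonadj H) => z zl W1 W2.
  have ml := ltn_ord m.
  have := LW x z xl zl W1; have := LW m z ml zl W2.
  have := RE m ml; have := RE x xl; slia.
- move=> xJ; right=> m Rm; exfalso.
  have := RE m (ltn_ord m); have := RE x xl; slia.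
case: (Hr tl) => _ _ _ _ [_ [Hu|Hr']].
- left=> m Rm; apply: (nonadj H) => z zl W1 W2.
  have ml := ltn_ord m.
  have := Hu z zl ltac:(by move: W1; rewrite xt Unt).
  have := LW m z ml zl W2; have := RE m ml; have := RE x xl; slia.
- right=> m Rm; apply: (nonadj H) => z zl W1 W2.
  have ml := ltn_ord m.
  have := Hr' z zl ltac:(by move: W1; rewrite xt Wnt //; slia).
  have := LW m z ml zl W2; have := RE m ml; have := RE x xl; slia.
Qed.

Lemma small_case (T : finType) (e : rel T) (e_irr : irreflexive e) l D J p q :
  Dhyp e l D -> 1 < l <= 3 -> 0 < J < l ->
  p \in D 0 -> (forall z, z < l -> p \in D z -> z = 0) ->
  q \in D J -> (forall z, z < l -> q \in D z -> z = J) ->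
  exists B : {set T}, pzf_set e B /\ #|B| = #|T| - l.
Proof.
move=> H l13 J0l p0 pL qJ qL.
have adj := adjl H; have inter := interD H; have diff := diffD H.
have [v0 [v00 v0J]] := inter 0 J ltac:(lia) ltac:(lia) ltac:(lia) ltac:(rewrite /ADJ; slia).
have [tl|tl] := ltnP (3 - J) l; last first.
  apply: (@small_core _ e e_irr l D J p q p p v0) => // tl'; clear -tl tl'; slia.
have notin x z : x \notin D z -> x \in D z -> False by move=> /negP.
have [/existsP[r /and3P[rt r0 rJ]]|Hn] := boolP [exists v, [&& v \in D (3 - J), v \notin D 0 & v \notin D J]].
  have [ur [urt ur0]] := inter (3 - J) 0 tl ltac:(lia) ltac:(lia) ltac:(rewrite /ADJ; slia).
  apply: (@small_core _ e e_irr l D J p q r ur v0) => // _; split=> //.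
    move=> z zl rz; have : z <> 0 by move=> E; subst z; exact: notin _ _ r0 rz.
    have : z <> J by move=> E; subst z; exact: notin _ _ rJ rz.
    clear -l13 J0l zl; slia.
  split=> //; right=> z zl rz E; subst z; exact: notin _ _ rJ rz.
have [r [rt r0]] := diff (3 - J) 0 tl ltac:(lia) ltac:(lia).
have [ur [urt urJ]] := diff (3 - J) J tl ltac:(lia) ltac:(lia).
have inn v : v \in D (3 - J) -> v \in D 0 \/ v \in D J.
  move=> vt; move/existsPn: Hn => /(_ v); rewrite vt /=.
  by case: (v \in D 0); case: (v \in D J); auto.
have ur0 : ur \in D 0 by case: (inn ur urt) => // E; move: urJ; rewrite E.
have rJ : r \in D J by case: (inn r rt) => // E; move: r0; rewrite E.
apply: (@small_core _ e e_irr l D J p q r ur v0) => // _; split=> //.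
  move=> z zl rz; have : z <> 0 by move=> E; subst z; exact: notin _ _ r0 rz.
  clear -l13 J0l zl tl; slia.
split=> //; left=> z zl uz E; subst z; exact: notin _ _ urJ uz.
Qed.

Lemma rot_inj l i x y : x < l -> y < l -> (i + x) %% l = (i + y) %% l -> x = y.
Proof.
move=> xl yl /eqP; rewrite eqn_modDl !modn_small // => /eqP //.
Qed.

Lemma rot_succ l i x y : 0 < l -> y < l ->
  ((i + y) %% l == ((i + x) %% l).+1 %% l) = (y == x.+1 %% l).
Proof.
move=> l0 yl; rewrite -addn1 modnDml addn1 -addnS eqn_modDl (modn_small yl).
by [].
Qed.

Lemma modS_case l x : x < l -> x.+1 %% l = if x.+1 == l then 0 else x.+1.
Proof. by move=> xl; case: eqP => [->|ne]; [rewrite modnn | rewrite modn_small //; lia]. Qed.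

Lemma bigmin_le (I : finType) (P : pred I) (F : I -> nat) n i0 :
  P i0 -> \big[minn/n]_(i | P i) F i <= F i0.
Proof.
move=> Pi0; rewrite -big_filter.
have : i0 \in [seq i <- index_enum I | P i] by rewrite mem_filter Pi0 mem_index_enum.
elim: [seq i <- index_enum I | P i] => [//|a r IH].
rewrite in_cons big_cons => /orP[/eqP->|/IH H]; first exact: geq_minl.
exact: leq_trans (geq_minr _ _) H.
Qed.

Theorem mainTheorem9 (T : finType) (e : rel T)
    (e_sym : symmetric e) (e_irr : irreflexive e)
    (l : nat) (C : 'I_l -> {set T}) :
  cycle_of_cliques e C ->
  (exists i j : 'I_l, [/\ i != j, private_part C i != set0 & private_part C j != set0]) ->
  Zplus e = #|T| - cc e.
Proof.
case=> Cinj [mm cyc] [i [j [ij /set0Pn[p pP] /set0Pn[q qP]]]].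
case/and3P: mm => cov /forallP maxc /eqP ccE.
have cardP : #|[set C k | k : 'I_l]| = l by rewrite card_imset // card_ord.
rewrite -ccE cardP.
have l0 : 0 < l by apply: leq_ltn_trans (ltn_ord i).
pose rot x : 'I_l := Ordinal (ltn_pmod (i + x) l0).
pose D x := C (rot x).
pose dd (k : 'I_l) := (k + (l - i)) %% l.
have ddl k : dd k < l by rewrite ltn_pmod.
have rotdd k : rot (dd k) = k.
  apply/val_inj => /=; rewrite /dd modnDmr addnCA subnKC ?(ltnW (ltn_ord i)) //.
  by rewrite modnDr modn_small.
have rot0 : rot 0 = i by apply/val_inj => /=; rewrite addn0 modn_small.
have rotI x y : x < l -> y < l -> rot x = rot y -> x = y.
  by move=> xl yl /(congr1 val) /= /(rot_inj xl yl).
have inP : forall k, C k \in [set C k | k : 'I_l] by move=> k; apply: imset_f.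
have H : Dhyp e l D.
  case/andP: cov => /forallP cl /forallP cv.
  split.
  - move=> x a b xl aD bD ab; have := implyP (cl (D x)) (inP _).
    move/forallP => /(_ a) /implyP /(_ aD) /forallP /(_ b) /implyP /(_ bD) /implyP; exact.
  - move=> a b eab; have /existsP[K /and3P[KP aK bK]] := implyP (forallP (cv a) b) eab.
    case/imsetP: KP => k _ Kk; subst K.
    by exists (dd k); rewrite /D rotdd.
  - move=> x y xl yl sub; apply: rotI => //; apply: Cinj.
    have /andP[_ /forallP /(_ (D y))] := implyP (maxc (D x)) (inP _).
    rewrite sub andbT (implyP (cl (D y)) (inP _)) /= => /eqP; exact.
  - move=> x y xl yl xy.
    have rxy : rot x != rot y by apply/eqP => /(rotI _ _ xl yl).
    have := cyc _ _ rxy; rewrite /cyc_adj /= !rot_succ // !modS_case //.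
    move=> E; split.
      case=> v [vx vy]; have : C (rot x) :&: C (rot y) != set0 by apply/set0Pn; exists v; rewrite inE vx vy.
      rewrite E; case: (eqVneq x.+1 l) => hx; case: (eqVneq y.+1 l) => hy;
        case/orP => /eqP; rewrite /ADJ; slia.
    move=> A; have : C (rot x) :&: C (rot y) != set0.
      have h1 : y = (if x.+1 == l then 0 else x.+1) \/ x = (if y.+1 == l then 0 else y.+1).
        case: (eqVneq x.+1 l) => hx; case: (eqVneq y.+1 l) => hy; move: A; rewrite /ADJ; slia.
      rewrite E; case: h1 => <-; by rewrite eqxx ?orbT.
    by case/set0Pn => v; rewrite inE => /andP[vx vy]; exists v.
have privL k v (vP : v \in private_part C k) z : z < l -> v \in D z -> z = dd k.
  move=> zl vz; apply: rotI => //; rewrite rotdd.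
  apply/eqP; apply/negPn/negP => zk; move: vP; rewrite /private_part inE => /andP[+ _].
  by move/bigcupP; apply; exists (rot z).
have pC : p \in C i by move: pP; rewrite inE => /andP[].
have qC : q \in C j by move: qP; rewrite inE => /andP[].
have i0 : dd i = 0 by apply: rotI => //; rewrite rotdd.
have J0 : 0 < dd j.
  rewrite lt0n; apply/eqP => E; move: ij; rewrite -(rotdd j) E rot0 eqxx.
  done.
have p0 : p \in D 0 by rewrite /D rot0.
have pL z : z < l -> p \in D z -> z = 0 by rewrite -i0; apply: privL.
have qJ : q \in D (dd j) by rewrite /D rotdd.
have qL z : z < l -> q \in D z -> z = dd j by apply: privL.
have l1 : 1 < l by have := ddl j; slia.
have [B [pB cB]] : exists B : {set T}, pzf_set e B /\ #|B| = #|T| - l.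
  have [l3|l3] := leqP l 3.
    apply: (small_case e_irr H _ _ p0 pL qJ qL); apply/andP; split => //; exact: ddl.
  apply: (big_case e_irr H l3 _ p0 pL qJ qL); apply/andP; split => //; exact: ddl.
rewrite /Zplus; apply/eqP; rewrite eqn_leq; apply/andP; split.
  by rewrite -cB; apply: bigmin_le.
apply: (big_ind (fun x => #|T| - l <= x)) => //.
- exact: leq_subr.
- by move=> a b Ha Hb; rewrite leq_min Ha Hb.
move=> B' HB'.
have := pzf_lower cov HB'.
have sub : [set K in [set C i | i : 'I_l] | ~~ (K \subset B')] \subset [set C i | i : 'I_l].
  by apply/subsetP => K; rewrite inE => /andP[].
move/leq_trans => /(_ _ (subset_leq_card sub)); rewrite cardP cardsCs setCK.
move=> h; have := subset_leq_card (subsetT B'); rewrite cardsT; slia.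
Qed.
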